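(* For $n\ge 3$, let $\mathscr{L}_n=\langle Q,\{a,b\},\delta\rangle$ with $Q=\{0,1,\dots,n-1\}$, where $\delta(i,b)=i+1$ for $0\le i\le n-2$ and $\delta(n-1,b)=0$; $\delta(i,a)=i+1$ for $0\le i\le n-4$, $\delta(n-3,a)=n-1$, $\delta(n-2,a)=0$ and $\delta(n-1,a)=0$. Then $sc(Syn(\mathscr{L}_n))=2^n-n$.
   Context: For a DFA $\mathscr{A}=\langle Q,\Sigma,\delta\rangle$ (total transition function, extended to words), $Syn(\mathscr{A})$ is the set of words $w\in\Sigma^*$ such that $\delta(q,w)=\delta(q',w)$ for all $q,q'\in Q$. The state complexity $sc(L)$ of a regular language $L$ is the number of states of the minimal (complete) DFA recognizing $L$. *)

(* Defs.v *)
From mathcomp Require Import all_boot.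
Set Implicit Arguments. Unset Strict Implicit. Unset Printing Implicit Defensive.

Inductive letter := La | Lb.

Section Automata.
Variable Sigma : Type.

Definition run (Q : Type) (delta : Q -> Sigma -> Q) (q : Q) (w : seq Sigma) : Q :=
  foldl delta q w.

Definition Syn (Q : Type) (delta : Q -> Sigma -> Q) : seq Sigma -> Prop :=
  fun w => forall q q' : Q, run delta q w = run delta q' w.

(* A complete DFA with m states (state set {0,...,m-1}, any finite state set
   is in bijection with such an ordinal type) recognizes L. *)
Definition recognizes (m : nat) (delta : 'I_m -> Sigma -> 'I_m) (s : 'I_m)
    (F : {set 'I_m}) (L : seq Sigma -> Prop) : Prop :=
  forall w, L w <-> run delta s w \in F.

Definition state_complexity_is (L : seq Sigma -> Prop) (k : nat) : Prop :=
  (exists (delta : 'I_k -> Sigma -> 'I_k) (s : 'I_k) (F : {set 'I_k}),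
      recognizes delta s F L) /\
  (forall (m : nat) (delta : 'I_m -> Sigma -> 'I_m) (s : 'I_m) (F : {set 'I_m}),
      recognizes delta s F L -> k <= m).
End Automata.

Definition Ln_nat (n i : nat) (x : letter) : nat :=
  match x with
  | Lb => if i + 2 <= n then i.+1 else 0          (* i <= n-2 -> i+1; n-1 -> 0 *)
  | La => if i + 4 <= n then i.+1                  (* i <= n-4 -> i+1 *)
          else if i + 3 == n then n.-1             (* n-3 -> n-1 *)
          else 0                                   (* n-2, n-1 -> 0 *)
  end.

(* L_n on Q = 'I_n (the fallback of insubd is never used since Ln_nat stays < n). *)
Definition Ln_delta (n : nat) (i : 'I_n) (x : letter) : 'I_n :=
  insubd i (Ln_nat n i x).

(* Main.v *)
Require Import Defs.
From mathcomp Require Import all_boot zify.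
From Stdlib Require Import ClassicalEpsilon.
Set Implicit Arguments. Unset Strict Implicit.

Ltac ifs := repeat (match goal with |- context [if ?b then _ else _] =>
   lazymatch b with context [if _ then _ else _] => fail | _ =>
     let E := fresh "E" in case E: b end end).

Section Nat.
Variable n : nat.
Hypothesis hn : 3 <= n.

Definition nrun (w : seq letter) (i : nat) := foldl (Ln_nat n) i w.

Lemma Ln_nat_lt i x : i < n -> Ln_nat n i x < n.
Proof. case: x => /= Hi; repeat case: ifP => ?; lia. Qed.

Lemma nrun_lt w i : i < n -> nrun w i < n.
Proof. elim: w i => //= x w IH i Hi; apply: IH; exact: Ln_nat_lt. Qed.

Lemma nrun_cat u v i : nrun (u ++ v) i = nrun v (nrun u i).
Proof. by rewrite /nrun foldl_cat. Qed.

Lemma b_pow k i : i < n -> k <= n ->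
  nrun (nseq k Lb) i = if i + k < n then i + k else i + k - n.
Proof.
elim: k i => [|k IH] i Hi Hk /=; first by rewrite addn0 Hi.
have H1 := @Ln_nat_lt i Lb Hi.
rewrite IH //; last lia.
move: H1; rewrite /=; repeat case: ifP => ?; lia.
Qed.

Definition unpos p := if p == n - 2 then n - 1 else p.
Definition wrap s := if s < n - 1 then s else s - (n - 1).

Lemma a_step p : p < n - 1 -> Ln_nat n (unpos p) La = unpos (wrap (p + 1)).
Proof.
move=> Hp; rewrite /wrap; case: ifP => H1; rewrite /unpos;
  case: eqP => [E|E]; rewrite /= -subn1; repeat case: ifP => ?; lia.
Qed.

Lemma a_pow k p : p < n - 1 -> k <= n - 1 ->
  nrun (nseq k La) (unpos p) = unpos (wrap (p + k)).
Proof.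
elim: k p => [|k IH] p Hp Hk.
  by rewrite addn0 /wrap; case: ifP => ?; [|lia].
change (nrun (nseq k La) (Ln_nat n (unpos p) La) = unpos (wrap (p + k.+1))).
rewrite a_step // IH; last lia; last by rewrite /wrap; case: ifP => ?; lia.
congr unpos; rewrite /wrap; case E: (p + 1 < n - 1); repeat case: ifP => ?; lia.
Qed.


Definition posx x := if n - 2 <= x then n - 2 else x.

Lemma a_pow' k x : x < n -> 1 <= k <= n - 1 ->
  nrun (nseq k La) x = unpos (wrap (posx x + k)).
Proof.
move=> Hx /andP[Hk1 Hk2].
case: (eqVneq x (n - 2)) => [->|Hne].
  case: k Hk1 Hk2 => // k _ Hk.
  change (nrun (nseq k La) (Ln_nat n (n - 2) La) = unpos (wrap (posx (n - 2) + k.+1))).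
  have -> : Ln_nat n (n - 2) La = unpos 0.
    rewrite /= /unpos; repeat case: ifP => ?; lia.
  rewrite a_pow; [|lia|lia]; congr unpos; rewrite /wrap /posx;
  ifs; lia.
have -> : x = unpos (posx x) by rewrite /unpos /posx; ifs; lia.
rewrite a_pow; [|rewrite /posx; case: ifP; lia|lia].
congr unpos; congr wrap; congr addn; rewrite /posx /unpos; ifs; lia.
Qed.

Definition gw j := if j <= n - 3 then nseq (n - 2 - j) La ++ nseq (j + 2) Lb
                   else nseq (n - 1) La.
Definition gmap j x := if x < j then x else if x <= n - 2 then x + 1 else n - 1.

Lemma gw_spec j x : j <= n - 2 -> x < n -> nrun (gw j) x = gmap j x.
Proof.
move=> Hj Hx; rewrite /gw; case: ifP => Hj3.
  rewrite nrun_cat a_pow'; [|lia|lia].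
  rewrite b_pow; last lia; last first.
    rewrite /unpos /wrap /posx; ifs; lia.
  rewrite /gmap /unpos /wrap /posx; ifs; lia.
rewrite a_pow'; [|lia|lia].
rewrite /gmap /unpos /wrap /posx; ifs; lia.
Qed.


Lemma e_pow m x : x < n ->
  nrun (flatten (nseq m (gw 0))) x = if x + m <= n - 1 then x + m else n - 1.
Proof.
elim: m x => [|m IH] x Hx; first by rewrite /nrun /= addn0; ifs; lia.
rewrite /= nrun_cat gw_spec; [|lia|lia].
rewrite IH; last by rewrite /gmap; ifs; lia.
rewrite /gmap; ifs; lia.
Qed.

Definition hw q := nseq (n - q) Lb ++ flatten (nseq (n - 2) (gw 0)).

Lemma hw_spec q x : q < n -> x < n -> nrun (hw q) x = if x == q then n - 2 else n - 1.
Proof.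
move=> Hq Hx; rewrite /hw nrun_cat b_pow; [|lia|lia].
rewrite e_pow; last by ifs; lia.
ifs; lia.
Qed.

Lemma sync_spec x : x < n -> nrun (flatten (nseq (n - 1) (gw 0))) x = n - 1.
Proof. move=> Hx; rewrite e_pow //; ifs; lia. Qed.

Lemma bn_id x : x < n -> nrun (nseq n Lb) x = x.
Proof. move=> Hx; rewrite b_pow //; ifs; lia. Qed.

End Nat.

Section Sets.
Variable n : nat.
Hypothesis hn : 3 <= n.

Notation D := (@Ln_delta n).
Definition img (S : {set 'I_n}) w := [set run D q w | q in S].

Lemma val_run (q : 'I_n) w : nat_of_ord (run D q w) = nrun n w (nat_of_ord q).
Proof.
elim: w q => //= x w IH q; rewrite /run /= -/(run D _ w) IH.
by rewrite /Ln_delta insubdK //; apply: Ln_nat_lt.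
Qed.

Lemma img_cat S u v : img S (u ++ v) = img (img S u) v.
Proof.
rewrite /img -imset_comp; apply: eq_imset => q /=.
by rewrite /run foldl_cat.
Qed.

Lemma img_nil S : img S [::] = S.
Proof. exact: imset_id. Qed.

Lemma syn_card w : Syn D w <-> #|img setT w| <= 1.
Proof.
split=> [H|H].
  apply/card_le1_eqP => y z /imsetP[q _ ->] /imsetP[q' _ ->]; exact: H.
move=> q q'; move/card_le1_eqP: H; apply; apply: imset_f; exact: in_setT.
Qed.

Lemma img_g (S : {set 'I_n}) j : j <= n - 2 -> (forall y : 'I_n, j <= y -> y \in S) ->
  img S (gw n j) = [set y in S | val y != j].
Proof.
move=> Hj HS; apply/setP => y; rewrite inE; apply/imsetP/andP.
  case=> x xS ->; have Hx := ltn_ord x.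
  have E := val_run x (gw n j); rewrite (gw_spec hn) in E; [|lia|lia].
  split; last by rewrite /= E /gmap; ifs; lia.
  case: (ltnP x j) => Hxj.
    have -> : run D x (gw n j) = x by apply: val_inj => /=; rewrite E /gmap Hxj.
    done.
  apply: HS; rewrite E /gmap; ifs; lia.
case=> yS; rewrite /= => Hyj; have Hy := ltn_ord y.
case: (ltnP y j) => Hyj'.
  exists y => //; apply: val_inj => /=; rewrite val_run (gw_spec hn) /gmap; [ifs; lia|lia|lia].
have Hy1 : y - 1 < n by lia.
exists (Ordinal Hy1); first by apply: HS => /=; lia.
apply: val_inj => /=; rewrite val_run (gw_spec hn) /gmap /=; [ifs; lia|lia|lia].
Qed.

Lemma reach_aux m : m <= n - 1 -> forall S : {set 'I_n},
  (forall y : 'I_n, m <= y -> y \in S) -> exists w, img setT w = S.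
Proof.
elim: m => [|m IH] Hm S HS.
  exists [::]; rewrite img_nil; apply/setP => y; rewrite inE HS //.
pose S0 := S :|: [set y : 'I_n | val y == m].
have [w Hw] : exists w, img setT w = S0.
  apply: IH; first lia.
  move=> y Hy; rewrite !inE /=; case: (ltnP m y) => H; first by rewrite HS.
  by apply/orP; right; apply/eqP; lia.
case: (boolP [exists y in S, val y == m]) => [/exists_inP[y0 y0S /eqP Hy0]|Hno].
  exists w; rewrite Hw; apply/setP => y; rewrite !inE.
  case yS: (y \in S) => //=; apply/negbTE/eqP => E.
  have Ey : y = y0 by apply: val_inj; rewrite /= E; apply/eqP; rewrite eq_sym; apply/eqP; exact: Hy0.
  by rewrite Ey y0S in yS.
exists (w ++ gw n m); rewrite img_cat Hw img_g; last first.
- move=> y Hy; rewrite !inE /=; case: (ltnP m y) => H; first by rewrite HS.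
  by apply/orP; right; apply/eqP; lia.
- lia.
apply/setP => y; rewrite !inE.
case: (eqVneq (val y) m) => [E|E]; rewrite ?andbF ?andbT ?orbF //=.
case yS: (y \in S) => //; move/exists_inP: Hno; case; exists y => //; exact/eqP.
Qed.


Lemma img_bn S : img S (nseq n Lb) = S.
Proof.
rewrite /img -[RHS]imset_id; apply: eq_imset => q.
apply: val_inj => /=; rewrite val_run (bn_id hn) //.
Qed.

Lemma reach (S : {set 'I_n}) : S != set0 -> exists w, img setT w = S.
Proof.
case/set0Pn => s sS.
have Hs := ltn_ord s.
pose S' := img S (nseq (n - 1 - s) Lb).
have [w0 Hw0] : exists w, img setT w = S'.
  apply: (@reach_aux (n - 1)) => // y Hy.
  have -> : y = run D s (nseq (n - 1 - s) Lb).
    apply: val_inj => /=; rewrite val_run (b_pow hn); [|lia|lia].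
    have := ltn_ord y; ifs; lia.
  exact: imset_f.
exists (w0 ++ nseq s.+1 Lb); rewrite img_cat Hw0 /S' -img_cat -nseqD.
have -> : n - 1 - s + s.+1 = n by lia.
exact: img_bn.
Qed.

Lemma hw_img (A : {set 'I_n}) (q : 'I_n) :
  q \notin A -> A != set0 -> #|img A (hw n q)| <= 1.
Proof.
move=> qA _; apply/card_le1_eqP => y z /imsetP[x xA ->] /imsetP[x' x'A ->].
apply: val_inj => /=; rewrite !val_run !(hw_spec hn) //.
have -> : (nat_of_ord x == q) = false.
  apply/negbTE; apply: contraNneq qA => E; have -> : q = x by apply: val_inj.
  done.
have -> : (nat_of_ord x' == q) = false.
  apply/negbTE; apply: contraNneq qA => E; have -> : q = x' by apply: val_inj.
  done.
done.
Qed.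

Lemma hw_img2 (A : {set 'I_n}) (q : 'I_n) :
  q \in A -> 2 <= #|A| -> 2 <= #|img A (hw n q)|.
Proof.
move=> qA /card_gt1P[x [y [xA yA xy]]].
have [r [rA rq]] : exists r, r \in A /\ r != q.
  case: (eqVneq x q) => [Ex|Ex]; last by exists x.
  by exists y; split => //; rewrite -Ex eq_sym.
apply/card_gt1P; exists (run D q (hw n q)), (run D r (hw n q)); split.
- exact: imset_f.
- exact: imset_f.
apply/eqP => /(congr1 val) /=; rewrite !val_run !(hw_spec hn) // eqxx.
have -> : (nat_of_ord r == q) = false.
  by apply/negbTE; apply: contra rq => /eqP E; apply/eqP; apply: val_inj.
lia.
Qed.

End Sets.

Lemma transport (T : finType) (d : T -> letter -> T) (s : T) (F : {set T})
  (L : seq letter -> Prop) :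
  (forall w, L w <-> run d s w \in F) ->
  exists (d' : 'I_#|T| -> letter -> 'I_#|T|) s' F', recognizes d' s' F' L.
Proof.
move=> H.
pose d' (i : 'I_#|T|) x := enum_rank (d (enum_val i) x).
have Hrun : forall w t, run d' (enum_rank t) w = enum_rank (run d t w).
  elim=> //= x w IH t; rewrite /run /= /d' enum_rankK; exact: IH.
exists d', (enum_rank s), [set enum_rank t | t in F] => w.
rewrite Hrun mem_imset; first exact: H.
exact: enum_rank_inj.
Qed.

Lemma card_big (n : nat) : 0 < n ->
  #|[pred A : {set 'I_n} | 2 <= #|A|]| = 2 ^ n - n.+1.
Proof.
move=> n0.
have HC := cardC [pred A : {set 'I_n} | 2 <= #|A|].
have HT : #|{set 'I_n}| = 2 ^ n.
  by rewrite -cardsT -powersetT card_powerset cardsT card_ord.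
have HN : #|[predC [pred A : {set 'I_n} | 2 <= #|A|]]| = n.+1.
  rewrite (@eq_card _ _ ([set A : {set 'I_n} | #|A| == 0] :|: [set A : {set 'I_n} | #|A| == 1])); last first.
    move=> A /=; rewrite !inE /=; case: #|A| => [|[|k]] //.
  rewrite cardsU !card_draws card_ord bin0 bin1.
  have -> : [set A : {set 'I_n} | #|A| == 0] :&: [set A : {set 'I_n} | #|A| == 1] = set0.
    by apply/setP => A; rewrite !inE; case: #|A| => [|[|k]].
  by rewrite cards0 subn0 add1n.
rewrite HN HT in HC.
by rewrite -HC addnK.
Qed.

Section Main.
Variable n : nat.
Hypothesis hn : 3 <= n.
Notation D := (@Ln_delta n).

Definition BigT := {A : {set 'I_n} | 2 <= #|A|}.
Definition stepT (t : option BigT) (x : letter) : option BigT :=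
  if t is Some A then insub [set D q x | q in val A] else None.

Lemma run_stepT (A : {set 'I_n}) w :
  run stepT (insub A) w = insub (img A w).
Proof.
elim: w A => [|x w IH] A; first by rewrite img_nil.
rewrite /run /= -/(run stepT _ w).
have -> : stepT (insub A) x = insub (img A [:: x]).
  have Hi : img A [:: x] = [set D q x | q in A] by [].
  case: insubP => [u Hu Eu|Hu] /=; first by rewrite Eu Hi.
  rewrite insubN // -ltnNge; apply: leq_ltn_trans (leq_imset_card _ _) _.
  by rewrite ltnNge.
by rewrite IH -img_cat.
Qed.

Lemma cardT : #|{: option BigT}| = 2 ^ n - n.
Proof.
rewrite card_option card_sig card_big; last lia.
have := ltn_expl n (isT : 1 < 2); move: (2 ^ n) => N; lia.
Qed.

Lemma upper : exists (delta : 'I_(2 ^ n - n) -> letter -> 'I_(2 ^ n - n)) s F,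
  recognizes delta s F (Syn D).
Proof.
rewrite -cardT; apply: (@transport _ stepT (insub setT) [set None]) => w.
rewrite run_stepT syn_card inE; case: insubP => [u Hu _|Hu] /=.
  by split => // H; move: Hu; rewrite ltnNge H.
by split => // _; rewrite leqNgt.
Qed.

Definition syw := flatten (nseq (n - 1) (gw n 0)).

Lemma syw_card : #|img [set: 'I_n] syw| <= 1.
Proof.
apply/card_le1_eqP => y z /imsetP[x _ ->] /imsetP[x' _ ->].
apply: val_inj => /=; rewrite !(val_run hn) /syw.
by have -> := sync_spec hn (ltn_ord x); have -> := sync_spec hn (ltn_ord x').
Qed.

Lemma bigne (A : BigT) : val A != set0.
Proof. by rewrite -card_gt0; apply: leq_trans (valP A). Qed.

Definition Wd (t : option BigT) : seq letter :=
  if t is Some A then proj1_sig (constructive_indefinite_description _ (reach hn (bigne A)))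
  else syw.

Lemma Wd_some A : img [set: 'I_n] (Wd (Some A)) = val A.
Proof. by rewrite /Wd; case: constructive_indefinite_description. Qed.

Lemma syn_Wd t z : Syn D (Wd t ++ z) <-> #|img (img [set: 'I_n] (Wd t)) z| <= 1.
Proof. by rewrite syn_card img_cat. Qed.

Lemma dist (A B : {set 'I_n}) : 2 <= #|A| -> 2 <= #|B| -> A != B ->
  exists z, ~ (#|img A z| <= 1 <-> #|img B z| <= 1).
Proof.
move=> HA HB AB.
have Ane : A != set0 by rewrite -card_gt0; apply: leq_trans HA.
have Bne : B != set0 by rewrite -card_gt0; apply: leq_trans HB.
case: (boolP (A \subset B)) => [sAB|/subsetPn[q qA qB]]; last first.
  exists (hw n q) => [[_ H]].
  by have := H (hw_img hn qB Bne); rewrite leqNgt (hw_img2 hn qA HA).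
have : ~~ (B \subset A) by apply: contra AB => sBA; rewrite eqEsubset sAB sBA.
case/subsetPn => q qB qA.
exists (hw n q) => [[H _]].
by have := H (hw_img hn qA Ane); rewrite leqNgt (hw_img2 hn qB HB).
Qed.

Lemma lower m (delta : 'I_m -> letter -> 'I_m) s F :
  recognizes delta s F (Syn D) -> 2 ^ n - n <= m.
Proof.
move=> Hrec.
pose f (t : option BigT) := run delta s (Wd t).
have Hcat : forall u z, run delta s (u ++ z) = run delta (run delta s u) z.
  by move=> u z; rewrite /run foldl_cat.
have key : forall t1 t2, f t1 = f t2 -> forall z,
    (#|img (img [set: 'I_n] (Wd t1)) z| <= 1 <-> #|img (img [set: 'I_n] (Wd t2)) z| <= 1).
  move=> t1 t2 E z; rewrite -!syn_Wd !Hrec !Hcat -/(f t1) -/(f t2) E //.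
have finj : injective f.
  move=> [A|] [B|] E; have K := key _ _ E.
  - congr Some; apply: val_inj; apply/eqP; apply/negPn/negP => AB.
    have [z Hz] := dist (valP A) (valP B) AB.
    by apply: Hz; rewrite -!Wd_some.
  - exfalso; have := proj2 (K [::]); rewrite !img_nil Wd_some.
    move/(_ syw_card); rewrite leqNgt; by have -> : 1 < #|val A| := valP A.
  - exfalso; have := proj1 (K [::]); rewrite !img_nil Wd_some.
    move/(_ syw_card); rewrite leqNgt; by have -> : 1 < #|val B| := valP B.
  - by [].
by have := leq_card f finj; rewrite cardT card_ord.
Qed.

End Main.

Theorem proposition3 (n : nat) (hn : 3 <= n) :
  state_complexity_is (Syn (@Ln_delta n)) (2 ^ n - n).
Proof. split; [exact: upper | exact: lower]. Qed.
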